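(* Let $\alpha_2\in\mathbb{C}$ and let $u(t)$ be a solution of the fourth-order equation $$\frac{d^4u}{dt^4}=10u\left(\frac{du}{dt}\right)^2+10u^2\frac{d^2u}{dt^2}-6u^5+tu+\alpha_2 .$$ Define $$q_1=u,\quad p_1=\frac{d^3u}{dt^3}+\left(\frac{du}{dt}\right)^2-\frac t2+\left(3u^3-6u\frac{du}{dt}-2\frac{d^2u}{dt^2}\right)u,\quad q_2=\frac{d^2u}{dt^2}-2u\frac{du}{dt},\quad p_2=\frac{du}{dt}-u^2 .$$ Then the map $(u,u',u'',u''')\mapsto(q_1,p_1,q_2,p_2)$ is birational, and $(q_1,p_1,q_2,p_2)$ satisfies the Hamiltonian system $$\frac{dq_1}{dt}=\frac{\partial H}{\partial p_1}=q_1^2+p_2,\quad \frac{dp_1}{dt}=-\frac{\partial H}{\partial q_1}=-2q_1p_1+\alpha_2-\frac12,\quad \frac{dq_2}{dt}=\frac{\partial H}{\partial p_2}=-3p_2^2+p_1+\frac t2,\quad \frac{dp_2}{dt}=-\frac{\partial H}{\partial q_2}=q_2$$ with the polynomial Hamiltonian $$H=q_1^2p_1+\left(\frac12-\alpha_2\right)q_1-p_2^3+\frac t2p_2-\frac{q_2^2}{2}+p_1p_2 .$$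
   Context: This fourth-order equation is the second member $P_{II}^{(2)}$ of the second Painlevé hierarchy. Primes denote $d/dt$. *)

(* Defs.v *)
(* mathcomp-analysis derivatives over the complex numbers
   R[i] (R : realType), with the complex modulus as norm, so derive1 is the
   complex derivative. *)
From HB Require Import structures.
From mathcomp Require Import all_boot all_order all_algebra.
From mathcomp Require Import all_classical all_reals all_analysis.
From mathcomp Require Import complex.
Import Order.TTheory GRing.Theory Num.Theory.
Import numFieldNormedType.Exports.

Set Implicit Arguments.
Unset Strict Implicit.
Unset Printing Implicit Defensive.

Local Open Scope ring_scope.

Definition CC (R : realType) := (R[i])^o.

Section Defs.
Variable K : fieldType.

Inductive polyfun5 : (('I_5 -> K) -> K) -> Prop :=
  | pf_const (c : K) : polyfun5 (fun _ => c)
  | pf_var (i : 'I_5) : polyfun5 (fun v => v i)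
  | pf_add f g : polyfun5 f -> polyfun5 g -> polyfun5 (fun v => f v + g v)
  | pf_mul f g : polyfun5 f -> polyfun5 g -> polyfun5 (fun v => f v * g v)
  | pf_ext f g : (forall v, f v = g v) -> polyfun5 f -> polyfun5 g.

(* A rational function in the 5 variables (t, x_0, x_1, x_2, x_3):
   a pair (numerator, denominator) of polynomial functions, the denominator
   not identically zero. *)
Record ratfun5 := RatFun5 {
  rf_num : ('I_5 -> K) -> K;
  rf_den : ('I_5 -> K) -> K;
  rf_num_poly : polyfun5 rf_num;
  rf_den_poly : polyfun5 rf_den;
  rf_den_nz : exists v, rf_den v != 0 }.

Definition ext5 (t : K) (x : 'I_4 -> K) : 'I_5 -> K :=
  fun i => match unlift ord0 i with None => t | Some j => x j end.

Definition rf_defined (f : ratfun5) (t : K) (x : 'I_4 -> K) : Prop :=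
  rf_den f (ext5 t x) != 0.

Definition rf_eval (f : ratfun5) (t : K) (x : 'I_4 -> K) : K :=
  rf_num f (ext5 t x) / rf_den f (ext5 t x).

(* A rational map K^4 --> K^4 over K(t) (t is a parameter). *)
Definition ratmap := 'I_4 -> ratfun5.

Definition rm_defined (F : ratmap) (t : K) (x : 'I_4 -> K) : Prop :=
  forall i, rf_defined (F i) t x.

Definition rm_eval (F : ratmap) (t : K) (x : 'I_4 -> K) : 'I_4 -> K :=
  fun i => rf_eval (F i) t x.

(* F and G are mutually inverse rational maps: G o F = id and F o G = id
   wherever the composites are defined, and these domains are nonempty
   (hence Zariski-dense). *)
Definition ratmap_inverse (F G : ratmap) : Prop :=
  [/\ (exists t x, rm_defined F t x /\ rm_defined G t (rm_eval F t x)),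
      (exists t y, rm_defined G t y /\ rm_defined F t (rm_eval G t y)),
      (forall t x, rm_defined F t x -> rm_defined G t (rm_eval F t x) ->
         forall i, rm_eval G t (rm_eval F t x) i = x i) &
      (forall t y, rm_defined G t y -> rm_defined F t (rm_eval G t y) ->
         forall i, rm_eval F t (rm_eval G t y) i = y i)].

Definition birational (Phi : K -> ('I_4 -> K) -> ('I_4 -> K)) : Prop :=
  exists F G : ratmap, ratmap_inverse F G /\
    forall t x, rm_defined F t x -> forall i, Phi t x i = rm_eval F t x i.

(* x = (u, u', u'', u'''), output = (q1, p1, q2, p2) *)
Definition PII2_q1 (t u u1 u2 u3 : K) : K := u.
Definition PII2_p1 (t u u1 u2 u3 : K) : K :=
  u3 + u1 ^+ 2 - t / 2%:R + (3%:R * u ^+ 3 - 6%:R * u * u1 - 2%:R * u2) * u.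
Definition PII2_q2 (t u u1 u2 u3 : K) : K := u2 - 2%:R * u * u1.
Definition PII2_p2 (t u u1 u2 u3 : K) : K := u1 - u ^+ 2.

Definition PII2_map (t : K) (x : 'I_4 -> K) : 'I_4 -> K :=
  let u := x (inord 0) in let u1 := x (inord 1) in
  let u2 := x (inord 2) in let u3 := x (inord 3) in
  fun i => match val i with
           | 0 => PII2_q1 t u u1 u2 u3
           | 1 => PII2_p1 t u u1 u2 u3
           | 2 => PII2_q2 t u u1 u2 u3
           | _ => PII2_p2 t u u1 u2 u3
           end.

Definition PII2_H (alpha2 t q1 p1 q2 p2 : K) : K :=
  q1 ^+ 2 * p1 + (1 / 2%:R - alpha2) * q1 - p2 ^+ 3 + t / 2%:R * p2
  - q2 ^+ 2 / 2%:R + p1 * p2.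

End Defs.

Definition jet4 (R : realType) (u : CC R -> CC R) (t : CC R) : 'I_4 -> CC R :=
  fun i => derive1n (val i) u t.

(* Main.v *)
Require Import Defs.
From HB Require Import structures.
From mathcomp Require Import all_boot all_order all_algebra.
From mathcomp Require Import all_classical all_reals all_analysis.
From mathcomp Require Import complex ring.
Import Order.TTheory GRing.Theory Num.Theory.
Import numFieldNormedType.Exports.
Local Open Scope ring_scope.
Section S.
Variable R : realType.
Local Notation C := (CC R).
Local Notation N := (numFieldNormedType.NumField_sort__canonical__normed_module_NormedModule R[i]).
Implicit Types (f g : C -> C) (x df dg : C).
Lemma conv f x df : @is_derive _ C C x 1 f df -> @is_derive _ C N x 1 f df.
Proof. exact id. Qed.
Lemma conv2 f x df : @is_derive _ C N x 1 f df -> @is_derive _ C C x 1 f df.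
Proof. exact id. Qed.
Definition ID x (f : C -> C) df : Prop := is_derive x 1 f df.
Lemma isdD f g x df dg : ID x f df -> ID x g dg ->
  ID x (fun s => f s + g s) (df + dg).
Proof. rewrite /ID => ??; exact: is_deriveD. Qed.
Lemma isdN f x df : ID x f df -> ID x (fun s => - f s) (- df).
Proof. rewrite /ID => ?; exact: is_deriveN. Qed.
Lemma isdM f g x df dg : ID x f df -> ID x g dg ->
  ID x (fun s => f s * g s) (f x * dg + g x * df).
Proof. rewrite /ID => /conv h1 /conv h2; apply: conv2; have := is_deriveM h1 h2; exact. Qed.
Lemma isdC (c : C) x : ID x (fun _ => c) 0.
Proof. exact: is_derive_cst. Qed.
Lemma isdI x : ID x (fun s : C => s) 1.
Proof. exact: is_derive_id. Qed.
Lemma isdX f n x df : ID x f df ->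
  ID x (fun s => f s ^+ n) (n%:R * f x ^+ n.-1 * df).
Proof.
move=> h; elim: n => [|n IH].
  rewrite mul0r mul0r; exact: (isdC 1).
have := @isdM _ _ _ _ _ h IH; rewrite /=.
have -> : (fun s => f s * f s ^+ n) = (fun s => f s ^+ n.+1).
  by apply/funext => s; rewrite exprS.
rewrite /ID => h2; apply: is_derive_eq h2 _.
case: n {IH} => [|n] /=; first by rewrite !expr0 !mulr1 !mul1r; ring.
rewrite [in RHS]mulrS !mulrDl mul1r addrC; congr (_ + _); rewrite !mulrA [f x * _]mulrC -!mulrA exprS !mulrA.
by [].
Qed.
Lemma d1 f x df : ID x f df -> derive1 f x = df.
Proof. by rewrite /ID => h; rewrite derive1E; apply: derive_val. Qed.
Lemma ed f x df : ID x f df -> derivable f x 1.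
Proof. by rewrite /ID => h; apply: ex_derive. Qed.
End S.
Arguments isdD {R}. Arguments isdN {R}. Arguments isdM {R}. Arguments isdX {R}. Arguments isdC {R}. Arguments isdI {R}. Arguments d1 {R f x df}. Arguments ed {R f x df}.

Ltac isd1 := match goal with
  | |- @ID _ _ (fun _ => ?c) _ => eapply isdC
  | |- @ID _ _ (fun s => s) _ => eapply isdI
  | |- @ID _ _ (fun s => @?a s + @?b s) _ => eapply (isdD a b)
  | |- @ID _ _ (fun s => - @?a s) _ => eapply (isdN a)
  | |- @ID _ _ (fun s => @?a s * @?b s) _ => eapply (isdM a b)
  | |- @ID _ _ (fun s => @?a s ^+ ?n) _ => eapply (isdX a n)
  | |- @ID _ _ id _ => eapply isdI
  | H : @ID _ _ (fun s => derive1n ?k ?u s) _ |- @ID _ _ (fun s => derive1n ?k ?u s) _ => exact H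
  end.
Ltac isd := repeat isd1.
Ltac drw R := match goal with |- context[derive1 ?f ?x] =>
  let h := fresh "h" in
  eassert (h : @ID R x f _); [solve [isd] | rewrite (d1 h); clear h] end.

Lemma part2 (R : realType) (alpha2 : CC R) (D : set (CC R))
    (u : CC R -> CC R) :
  (forall t, D t -> forall k : nat, (k < 4)%N -> derivable (derive1n k u) t 1) ->
  (forall t, D t ->
     derive1n 4 u t =
       10%:R * u t * (derive1 u t) ^+ 2 + 10%:R * (u t) ^+ 2 * derive1n 2 u t
       - 6%:R * (u t) ^+ 5 + t * u t + alpha2) ->
  (forall t, D t ->
     let q1 := fun s => PII2_map s (jet4 u s) (inord 0) in
     let p1 := fun s => PII2_map s (jet4 u s) (inord 1) in
     let q2 := fun s => PII2_map s (jet4 u s) (inord 2) in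
     let p2 := fun s => PII2_map s (jet4 u s) (inord 3) in
     let H := PII2_H alpha2 in
     [/\ derivable q1 t 1, derivable p1 t 1, derivable q2 t 1 & derivable p2 t 1] /\
     [/\ derive1 q1 t = derive1 (fun y => H t (q1 t) y (q2 t) (p2 t)) (p1 t)
         /\ derive1 q1 t = (q1 t) ^+ 2 + p2 t,
         derive1 p1 t = - derive1 (fun y => H t y (p1 t) (q2 t) (p2 t)) (q1 t)
         /\ derive1 p1 t = - 2%:R * q1 t * p1 t + alpha2 - 1 / 2%:R,
         derive1 q2 t = derive1 (fun y => H t (q1 t) (p1 t) (q2 t) y) (p2 t)
         /\ derive1 q2 t = - 3%:R * (p2 t) ^+ 2 + p1 t + t / 2%:R &
         derive1 p2 t = - derive1 (fun y => H t (q1 t) (p1 t) y (p2 t)) (q2 t)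
         /\ derive1 p2 t = q2 t]).
Proof.
move=> hder hode t Dt.
have hk : forall k, (k < 4)%N -> ID R t (fun s => derive1n k u s) (derive1n k.+1 u t).
  move=> k hk; have := derivableP (hder t Dt k hk).
  by rewrite -derive1E.
have h0 := hk 0%N isT; have h1 := hk 1%N isT; have h2 := hk 2%N isT; have h3 := hk 3%N isT.
clear hk.
have e4 := hode t Dt.
rewrite /PII2_map /jet4 /PII2_H /PII2_q1 /PII2_p1 /PII2_q2 /PII2_p2.
have v0 : val (inord 0 : 'I_4) = 0%N by apply: inordK.
have v1 : val (inord 1 : 'I_4) = 1%N by apply: inordK.
have v2 : val (inord 2 : 'I_4) = 2%N by apply: inordK.
have v3 : val (inord 3 : 'I_4) = 3%N by apply: inordK.
rewrite !v0 !v1 !v2 !v3.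
rewrite -derive1n1 in e4.
split; [split; eapply ed; isd|].
have two : (2%:R : CC R) != 0 by rewrite pnatr_eq0.
split; split; repeat drw R.
all: rewrite ?e4 ?derive1n0.
all: rewrite -?[(2.-1)%N]/1%N -?[(3.-1)%N]/2%N -?[(5.-1)%N]/4%N.
all: move: (derive1n 1 u t) (derive1n 2 u t) (derive1n 3 u t) (u t) => a1 a2 a3 a0.
8: field. 7: field. 6: field. 5: field. 4: field. 3: field. 2: ring. 1: ring. all: by [].
Qed.

Section Bir.
Variable K : fieldType.
Implicit Types (f g : ('I_5 -> K) -> K).

Lemma pf_opp f : polyfun5 f -> polyfun5 (fun v => - f v).
Proof.
move=> h; apply: (pf_ext (f := fun v => (-1) * f v)); first by move=> v; rewrite mulN1r.
exact: pf_mul (pf_const _) h.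
Qed.
Lemma pf_exp f n : polyfun5 f -> polyfun5 (fun v => f v ^+ n).
Proof.
move=> h; elim: n => [|n IH].
  apply: (pf_ext (f := fun _ => 1)); first by move=> v; rewrite expr0.
  exact: pf_const.
apply: (pf_ext (f := fun v => f v * f v ^+ n)); first by move=> v; rewrite exprS.
exact: pf_mul.
Qed.

Lemma one_nz : exists v : 'I_5 -> K, (fun _ => (1 : K)) v != 0.
Proof. by exists (fun _ => 0); rewrite oner_neq0. Qed.

Definition mk f (H : polyfun5 f) : ratfun5 K := RatFun5 H (pf_const 1) one_nz.

Definition TT (v : 'I_5 -> K) := v ord0.
Definition XX (k : nat) (v : 'I_5 -> K) := v (lift ord0 (inord k : 'I_4)).

Lemma ext5_0 (t : K) (x : 'I_4 -> K) : ext5 t x ord0 = t.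
Proof. by rewrite /ext5 unlift_none. Qed.
Lemma ext5_l (t : K) (x : 'I_4 -> K) j : ext5 t x (lift ord0 j) = x j.
Proof. by rewrite /ext5 liftK. Qed.

Lemma mkE f H (t : K) (x : 'I_4 -> K) : rf_eval (@mk f H) t x = f (ext5 t x).
Proof. by rewrite /rf_eval /= divr1. Qed.
End Bir.

Ltac pf := repeat match goal with
  | |- polyfun5 (fun _ => ?c) => apply: pf_const
  | |- polyfun5 (fun v => v ?i) => apply: pf_var
  | |- polyfun5 (fun v => TT v) => apply: pf_var
  | |- polyfun5 (fun v => XX ?k v) => apply: pf_var
  | |- polyfun5 (fun v => @?a v + @?b v) => apply: (@pf_add _ a b)
  | |- polyfun5 (fun v => - @?a v) => apply: (@pf_opp _ a)
  | |- polyfun5 (fun v => @?a v * @?b v) => apply: (@pf_mul _ a b)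
  | |- polyfun5 (fun v => @?a v ^+ ?n) => apply: (@pf_exp _ a n)
  end.

Section Bir2.
Variable K : fieldType.
Local Notation T := (@TT K).
Local Notation X := (@XX K).

Definition F0 v : K := X 0 v.
Definition F1 v : K := X 3 v + X 1 v ^+ 2 - T v / 2%:R
  + (3%:R * X 0 v ^+ 3 - 6%:R * X 0 v * X 1 v - 2%:R * X 2 v) * X 0 v.
Definition F2 v : K := X 2 v - 2%:R * X 0 v * X 1 v.
Definition F3 v : K := X 1 v - X 0 v ^+ 2.
Definition G0 v : K := X 0 v.
Definition G1 v : K := X 3 v + X 0 v ^+ 2.
Definition G2 v : K := X 2 v + 2%:R * X 0 v * (X 3 v + X 0 v ^+ 2).
Definition G3 v : K := X 1 v - (X 3 v + X 0 v ^+ 2) ^+ 2 + T v / 2%:R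
  - (3%:R * X 0 v ^+ 3 - 6%:R * X 0 v * (X 3 v + X 0 v ^+ 2)
     - 2%:R * (X 2 v + 2%:R * X 0 v * (X 3 v + X 0 v ^+ 2))) * X 0 v.

Lemma pF0 : polyfun5 F0. Proof. rewrite /F0 /XX /TT; pf. Qed.
Lemma pF1 : polyfun5 F1. Proof. rewrite /F1 /XX /TT; pf. Qed.
Lemma pF2 : polyfun5 F2. Proof. rewrite /F2 /XX /TT; pf. Qed.
Lemma pF3 : polyfun5 F3. Proof. rewrite /F3 /XX /TT; pf. Qed.
Lemma pG0 : polyfun5 G0. Proof. rewrite /G0 /XX /TT; pf. Qed.
Lemma pG1 : polyfun5 G1. Proof. rewrite /G1 /XX /TT; pf. Qed.
Lemma pG2 : polyfun5 G2. Proof. rewrite /G2 /XX /TT; pf. Qed.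
Lemma pG3 : polyfun5 G3. Proof. rewrite /G3 /XX /TT; pf. Qed.

Definition FF : ratmap K := fun i =>
  match val i with 0 => @mk K _ pF0 | 1 => @mk K _ pF1 | 2 => @mk K _ pF2 | _ => @mk K _ pF3 end.
Definition GG : ratmap K := fun i =>
  match val i with 0 => @mk K _ pG0 | 1 => @mk K _ pG1 | 2 => @mk K _ pG2 | _ => @mk K _ pG3 end.

Lemma ord4 (P : 'I_4 -> Prop) :
  P (inord 0) -> P (inord 1) -> P (inord 2) -> P (inord 3) -> forall i, P i.
Proof.
move=> p0 p1 p2 p3 [[|[|[|[|k]]]] Hi] //.
- by have -> : Ordinal Hi = inord 0 by apply: val_inj; rewrite /= inordK.
- by have -> : Ordinal Hi = inord 1 by apply: val_inj; rewrite /= inordK.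
- by have -> : Ordinal Hi = inord 2 by apply: val_inj; rewrite /= inordK.
- by have -> : Ordinal Hi = inord 3 by apply: val_inj; rewrite /= inordK.
Qed.

Lemma w0 : val (inord 0 : 'I_4) = 0%N. Proof. exact: inordK. Qed.
Lemma w1 : val (inord 1 : 'I_4) = 1%N. Proof. exact: inordK. Qed.
Lemma w2 : val (inord 2 : 'I_4) = 2%N. Proof. exact: inordK. Qed.
Lemma w3 : val (inord 3 : 'I_4) = 3%N. Proof. exact: inordK. Qed.

Lemma FF_def t x : rm_defined FF t x.
Proof.
by apply: ord4; rewrite /rf_defined /FF ?w0 ?w1 ?w2 ?w3 /= oner_neq0.
Qed.
Lemma GG_def t x : rm_defined GG t x.
Proof.
by apply: ord4; rewrite /rf_defined /GG ?w0 ?w1 ?w2 ?w3 /= oner_neq0.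
Qed.

Lemma XE (t : K) x k : X k (ext5 t x) = x (inord k).
Proof. by rewrite /XX ext5_l. Qed.
Lemma TE (t : K) x : T (ext5 t x) = t.
Proof. by rewrite /TT ext5_0. Qed.

Lemma FF_eval t x i : rm_eval FF t x i = PII2_map t x i.
Proof.
move: i; apply: ord4; rewrite /rm_eval /FF /PII2_map ?w0 ?w1 ?w2 ?w3 mkE
  /F0 /F1 /F2 /F3 !XE ?TE /PII2_q1 /PII2_p1 /PII2_q2 /PII2_p2 //.
Qed.

Lemma GF t x i : rm_eval GG t (rm_eval FF t x) i = x i.
Proof.
set y := rm_eval FF t x.
move: i; apply: ord4; rewrite /rm_eval /GG ?w0 ?w1 ?w2 ?w3 mkE
  /G0 /G1 /G2 /G3 !XE ?TE /y !FF_eval /PII2_map ?w0 ?w1 ?w2 ?w3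
  /PII2_q1 /PII2_p1 /PII2_q2 /PII2_p2; ring.
Qed.

Lemma FG t y i : rm_eval FF t (rm_eval GG t y) i = y i.
Proof.
move: i; apply: ord4; rewrite /rm_eval /FF ?w0 ?w1 ?w2 ?w3 mkE
  /F0 /F1 /F2 /F3 !XE ?TE /GG ?w0 ?w1 ?w2 ?w3 !mkE /G0 /G1 /G2 /G3 !XE ?TE; ring.
Qed.

Lemma bir : birational (@PII2_map K).
Proof.
exists FF, GG; split; last by move=> t x _ i; rewrite FF_eval.
split.
- by exists 0, (fun _ => 0); split; [exact: FF_def | exact: GG_def].
- by exists 0, (fun _ => 0); split; [exact: GG_def | exact: FF_def].
- by move=> t x _ _ i; apply: GF.
- by move=> t y _ _ i; apply: FG.
Qed.
End Bir2.

Theorem theorem2p1 (R : realType) (alpha2 : CC R) (D : set (CC R))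
    (u : CC R -> CC R) :
  open D ->
  (forall t, D t -> forall k : nat, (k < 4)%N -> derivable (derive1n k u) t 1) ->
  (forall t, D t ->
     derive1n 4 u t =
       10%:R * u t * (derive1 u t) ^+ 2 + 10%:R * (u t) ^+ 2 * derive1n 2 u t
       - 6%:R * (u t) ^+ 5 + t * u t + alpha2) ->
  birational (@PII2_map (CC R)) /\
  (forall t, D t ->
     let q1 := fun s => PII2_map s (jet4 u s) (inord 0) in
     let p1 := fun s => PII2_map s (jet4 u s) (inord 1) in
     let q2 := fun s => PII2_map s (jet4 u s) (inord 2) in
     let p2 := fun s => PII2_map s (jet4 u s) (inord 3) in
     let H := PII2_H alpha2 in
     [/\ derivable q1 t 1, derivable p1 t 1, derivable q2 t 1 & derivable p2 t 1] /\
     [/\ derive1 q1 t = derive1 (fun y => H t (q1 t) y (q2 t) (p2 t)) (p1 t)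
         /\ derive1 q1 t = (q1 t) ^+ 2 + p2 t,
         derive1 p1 t = - derive1 (fun y => H t y (p1 t) (q2 t) (p2 t)) (q1 t)
         /\ derive1 p1 t = - 2%:R * q1 t * p1 t + alpha2 - 1 / 2%:R,
         derive1 q2 t = derive1 (fun y => H t (q1 t) (p1 t) (q2 t) y) (p2 t)
         /\ derive1 q2 t = - 3%:R * (p2 t) ^+ 2 + p1 t + t / 2%:R &
         derive1 p2 t = - derive1 (fun y => H t (q1 t) (p1 t) y (p2 t)) (q2 t)
         /\ derive1 p2 t = q2 t]).
Proof.
move=> _ hder hode; split; first exact: bir.
exact: part2 hder hode.
Qed.
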